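(* Under the setup below, for every $\mathbf{z}\in\mathbb{R}^V$, \[\mathbf{M}\mathbf{z}=\mathbf{W}^{1/2}\mathbf{B}\,\mathbf{\Pi}^{(0)\top}\cdots\mathbf{\Pi}^{(\eta-1)\top}\mathbf{z}.\]
   Context: Setup. Let $G=(V,E)$ be a connected undirected graph with $|V|=n$ and $m$ edges (parallel edges allowed), positive edge weights $\mathbf{w}$, $\mathbf{W}=\mathrm{diag}(\mathbf{w})$, signed edge–vertex incidence matrix $\mathbf{B}\in\mathbb{R}^{E\times V}$; for a region (edge-induced subgraph) $H$, $\mathbf{B}[H]$ is $\mathbf{B}$ with rows of edges not in $E(H)$ set to zero. All matrices are padded with zeros to act on $\mathbb{R}^V$ (or map into $\mathbb{R}^E$); $\mathbf{I}$ is the $n\times n$ identity and $\mathbf{I}_S$ the diagonal $0/1$ matrix of $S\subseteq V$; $\mathbf{M}_{S,T}$ is the submatrix with rows $S$, columns $T$ (padded); $\mathbf{M}^{-1}$ is the Moore–Penrose pseudoinverse if singular. Separator tree. A separator tree $\mathcal{T}$ of $G$ is a rooted binary tree whose nodes are regions $H$ of $G$, each storing vertex sets $\partial H$ (boundary), $S(H)$ (separator), $F_H$ (eliminated vertices), defined top-down: the root is $H=G$ with $\partial G=\emptyset$ and $F_G=S(G)$. A non-leaf node $H$ has exactly two children $D_1,D_2$ whose edge sets partition $E(H)$, with no isolated vertices, and $V(D_1)\cap V(D_2)=S(H)$; then $\partial D_j=(\partial H\cup S(H))\cap V(D_j)$ for $j=1,2$, and $F_H=S(H)\setminus\partial H$.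 A node with a constant number of edges is a leaf, with $S(H)=\emptyset$ and $F_H=V(H)\setminus\partial H$. The level $\eta(H)$ of a node is the maximum number of edges on a tree path from $H$ down to a descendant (leaves have level 0); $\eta$ is the maximum level (height); $\mathcal{T}(i)$ is the set of nodes at level $i$. The sets $\{F_H\}_{H\in\mathcal{T}}$ partition $V$. Operators. For each node $H$ let $\mathbf{L}^{(H)}$ be a given Laplacian supported on $\partial H\cup F_H$; $\mathbf{X}^{(H)}=\mathbf{L}^{(H)}_{\partial H,F_H}(\mathbf{L}^{(H)}_{F_H,F_H})^{-1}$; $\mathbf{\Pi}^{(i)}=\mathbf{I}-\sum_{H\in\mathcal{T}(i)}\mathbf{X}^{(H)}$ for $0\le i\le\eta-1$. Slack tree operator. For a node $H$ with parent $P$, the edge operator is $\mathbf{M}_{(H,P)}=\mathbf{I}_{\partial H\cup F_H}-(\mathbf{L}^{(H)}_{F_H,F_H})^{-1}\mathbf{L}^{(H)}_{F_H,\partial H}=\mathbf{I}_{\partial H\cup F_H}-\mathbf{X}^{(H)\top}$. For a leaf $H$, the leaf operator is $\mathbf{J}_H=\mathbf{W}^{1/2}\mathbf{B}[H]$. For a leaf $H$ and a node $A$ that is $H$ or an ancestor of $H$, with tree path $H=H_1,H_2,\dots,H_t=A$ ($H_{j+1}$ the parent of $H_j$), let $\mathbf{M}_{H\leftarrow A}=\mathbf{M}_{(H_1,H_2)}\mathbf{M}_{(H_2,H_3)}\cdots\mathbf{M}_{(H_{t-1},H_t)}$ (the identity if $t=1$). Then $\mathbf{M}=\sum_{\text{leaf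 }H,\ \text{node }A:\ H\text{ in the subtree of }A}\mathbf{J}_H\mathbf{M}_{H\leftarrow A}\mathbf{I}_{F_A}$. *)

(* Defs.v *)
From HB Require Import structures.
From mathcomp Require Import all_boot all_order all_algebra.
From Stdlib Require Import ClassicalEpsilon.
Set Implicit Arguments.
Unset Strict Implicit.
Unset Printing Implicit Defensive.
Import Order.TTheory GRing.Theory Num.Theory.
Local Open Scope ring_scope.

(* Linear algebra conventions: vertices V = 'I_n, edges E = 'I_m.      *)
(* All matrices acting on R^V are n x n (padded with zeros).           *)

(* Penrose conditions (real matrices: conjugate transpose = transpose). *)
Definition penrose (R : rcfType) n (A X : 'M[R]_n) : Prop :=
  [/\ A *m X *m A = A, X *m A *m X = X,
      (A *m X)^T = A *m X & (X *m A)^T = X *m A].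

(* Moore--Penrose pseudoinverse (the unique matrix satisfying the Penrose
   conditions; it coincides with the inverse when A is invertible). *)
Definition MPinv (R : rcfType) n (A : 'M[R]_n) : 'M[R]_n :=
  epsilon (inhabits 0) (penrose A).

Definition idS (R : rcfType) n (S : {set 'I_n}) : 'M[R]_n :=
  \matrix_(i, j) ((i == j) && (i \in S))%:R.
Arguments idS {R n} S.

Definition subm (R : rcfType) n (S T : {set 'I_n}) (A : 'M[R]_n) : 'M[R]_n :=
  \matrix_(i, j) (if (i \in S) && (j \in T) then A i j else 0).

Definition incidence (R : rcfType) n m (u v : 'I_m -> 'I_n) : 'M[R]_(m, n) :=
  \matrix_(e, x) ((x == u e)%:R - (x == v e)%:R).

Definition restrict_rows (R : rcfType) m n (Er : {set 'I_m})
    (B : 'M[R]_(m, n)) : 'M[R]_(m, n) :=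
  \matrix_(e, x) (if e \in Er then B e x else 0).

Definition sqrtW (R : rcfType) m (w : 'I_m -> R) : 'M[R]_m :=
  diag_mx (\row_e Num.sqrt (w e)).

Definition is_laplacian (R : rcfType) n (L : 'M[R]_n) : Prop :=
  [/\ L^T = L, (forall i j, i != j -> L i j <= 0) &
      (forall i, \sum_j L i j = 0)].

Definition supported_on (R : rcfType) n (L : 'M[R]_n) (S : {set 'I_n}) : Prop :=
  forall i j, L i j != 0 -> (i \in S) && (j \in S).

Definition Vset n m (u v : 'I_m -> 'I_n) (Er : {set 'I_m}) : {set 'I_n} :=
  [set x | [exists e in Er, (u e == x) || (v e == x)]].

Definition adjacent n m (u v : 'I_m -> 'I_n) : rel 'I_n :=
  fun x y => [exists e, ((u e == x) && (v e == y)) || ((u e == y) && (v e == x))].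

Definition graph_connected n m (u v : 'I_m -> 'I_n) : Prop :=
  forall x y, connect (adjacent u v) x y.

Definition anc (T : finType) (par : T -> option T) (k : nat) (H : T) : option T :=
  iter k (fun o => obind par o) (Some H).

Definition children (T : finType) (par : T -> option T) (H : T) : {set T} :=
  [set D | par D == Some H].

Definition is_leaf (T : finType) (par : T -> option T) (H : T) : bool :=
  children par H == set0.

Definition is_anc (T : finType) (par : T -> option T) (A H : T) : bool :=
  [exists k : 'I_#|T|, anc par k H == Some A].

(* number of tree edges on the path from H up to its ancestor A *)
Definition tdist (T : finType) (par : T -> option T) (H A : T) : nat :=
  \max_(k < #|T| | anc par k H == Some A) k.

(* level: maximum number of edges on a tree path from H down to a descendant *)
Definition level (T : finType) (par : T -> option T) (H : T) : nat :=
  \max_(D : T) \max_(k < #|T| | anc par k D == Some H) k.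

Definition height (T : finType) (par : T -> option T) : nat :=
  \max_(H : T) level par H.

Definition Fset n m (u v : 'I_m -> 'I_n) (T : finType) (par : T -> option T)
    (region : T -> {set 'I_m}) (sep bd : T -> {set 'I_n}) (H : T) : {set 'I_n} :=
  if is_leaf par H then Vset u v (region H) :\: bd H else sep H :\: bd H.

Section Operators.
Variables (R : rcfType) (n m : nat) (u v : 'I_m -> 'I_n) (w : 'I_m -> R).
Variables (T : finType) (par : T -> option T) (region : T -> {set 'I_m}).
Variables (sep bd : T -> {set 'I_n}) (L : T -> 'M[R]_n).

Let F := Fset u v par region sep bd.

Definition Xop (H : T) : 'M[R]_n :=
  subm (bd H) (F H) (L H) *m MPinv (subm (F H) (F H) (L H)).

Definition PiOp (i : nat) : 'M[R]_n :=
  1%:M - \sum_(H : T | level par H == i) Xop H.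

Definition PiProdT : 'M[R]_n :=
  foldr (fun i acc => (PiOp i)^T *m acc) 1%:M (iota 0 (height par)).

(* edge operator M_(H,P) = I_{dH u F_H} - X^(H)^T  (depends only on H) *)
Definition Medge (H : T) : 'M[R]_n := idS (bd H :|: F H) - (Xop H)^T.

(* M_{H <- A} where A is the k-th ancestor of H :
   M_(H_1,H_2) M_(H_2,H_3) ... M_(H_k,H_{k+1}) *)
Definition Mpath (H : T) (k : nat) : 'M[R]_n :=
  foldr (fun j acc => Medge (odflt H (anc par j H)) *m acc) 1%:M (iota 0 k).

Definition Jop (H : T) : 'M[R]_(m, n) :=
  sqrtW w *m restrict_rows (region H) (incidence R u v).

Definition slackM : 'M[R]_(m, n) :=
  \sum_(H : T | is_leaf par H) \sum_(A : T | is_anc par A H)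
     Jop H *m Mpath H (tdist par H A) *m idS (F A).

End Operators.

(* Main.v *)
Require Import Defs.
From HB Require Import structures.
From mathcomp Require Import all_boot all_order all_algebra.
From Stdlib Require Import ClassicalEpsilon.
Set Implicit Arguments. Unset Strict Implicit. Unset Printing Implicit Defensive.
Import Order.TTheory GRing.Theory Num.Theory.

Section Tree.
Variables (T : finType) (root : T) (par : T -> option T).
Hypothesis hroot : par root = None.
Hypothesis hreach : forall H, exists k, anc par k H = Some root.

Lemma iter_none k : iter k (fun o => obind par o) None = None.
Proof. by elim: k => //= k ->. Qed.

Lemma ancS k H : anc par k.+1 H = obind par (anc par k H).
Proof. by []. Qed.

Lemma ancSr k H : anc par k.+1 H = if par H is Some P then anc par k P else None.
Proof. by rewrite /anc iterSr /=; case: (par H) => // ; rewrite iter_none. Qed.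

Lemma anc_add a b H : anc par (a + b) H = obind (anc par a) (anc par b H).
Proof.
elim: a => [|a IH]; first by case: (anc par b H).
by rewrite addSn ancS IH; case: (anc par b H) => //.
Qed.

Lemma anc0 H : anc par 0 H = Some H. Proof. by []. Qed.

Lemma anc_none_mono j k H : anc par j H = None -> j <= k -> anc par k H = None.
Proof. by move=> hj /subnK <-; rewrite anc_add hj. Qed.

Lemma anc_root_none k : anc par k.+1 root = None.
Proof. by rewrite ancSr hroot. Qed.

Lemma anc_uniq k k' H A : anc par k H = Some A -> anc par k' H = Some A -> k = k'.
Proof.
wlog le : k k' / k <= k'.
  move=> W h1 h2; case: (leqP k k') => [l|l]; first exact: W.
  by symmetry; apply: W h2 h1; apply: ltnW.
move=> h1 h2; apply/eqP; rewrite eqn_leq le /=; rewrite leqNgt; apply/negP => lt.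
set d := k' - k.
have dA : anc par d A = Some A by rewrite -h2 -(subnK le) anc_add h1.
have dpos : 0 < d by rewrite subn_gt0.
have per t : anc par (t * d) A = Some A.
  by elim: t => [|t IH] //; rewrite mulSn anc_add IH.
case: (hreach A) => e he.
have : anc par (e.+1 * d) A = None.
  apply: (anc_none_mono (j := e.+1)); first by rewrite ancS he /= hroot.
  by rewrite leq_pmulr.
by rewrite per.
Qed.

Lemma anc_bound k H A : anc par k H = Some A -> k < #|T|.
Proof.
move=> hk; case: (hreach H) => e he.
have ke : k <= e.
  rewrite leqNgt; apply/negP => lt.
  have : anc par k H = None.
    by apply: (anc_none_mono (j := e.+1)) => //; rewrite ancS he /= hroot.
  by rewrite hk.
have some j : j <= e -> anc par j H != None.
  move=> je; apply/negP => /eqP hn.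
  by have := anc_none_mono hn je; rewrite he.
pose f (j : 'I_e.+1) := odflt H (anc par j H).
have finj : injective f.
  move=> i j; rewrite /f.
  have := some i (ltn_ord i); have := some j (ltn_ord j).
  case ei: (anc par i H) => [Xi|] //; case ej: (anc par j H) => [Xj|] // _ _ /= eq.
  by apply: val_inj; apply: (anc_uniq ei); rewrite ej eq.
have := leq_card f finj; rewrite card_ord => h.
by apply: leq_ltn_trans h.
Qed.

Lemma is_ancP A H : reflect (exists k, anc par k H = Some A) (is_anc par A H).
Proof.
apply: (iffP existsP) => [[k /eqP hk]|[k hk]]; first by exists k.
by exists (Ordinal (anc_bound hk)); apply/eqP.
Qed.

Lemma tdistE k H A : anc par k H = Some A -> tdist par H A = k.
Proof.
move=> hk; rewrite /tdist (big_pred1 (Ordinal (anc_bound hk))) //.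
move=> j /=; apply/eqP/eqP => [hj|->//]; apply: val_inj => /=.
by apply: anc_uniq hj hk.
Qed.

Lemma level_ge k D H : anc par k D = Some H -> k <= level par H.
Proof.
move=> hk; rewrite /level; apply: leq_trans (leq_bigmax D).
by apply: (@leq_bigmax_cond _ _ _ (Ordinal (anc_bound hk))) => /=; apply/eqP.
Qed.

Lemma level_par H P : par H = Some P -> level par H < level par P.
Proof.
move=> hp.
have h1 : anc par 1 H = Some P by rewrite ancSr hp.
have pos := level_ge h1.
rewrite -(prednK pos) ltnS; apply/bigmax_leqP => D _; apply/bigmax_leqP => k /eqP hk.
rewrite -ltnS prednK //; apply: (@level_ge k.+1 D).
by rewrite ancS hk.
Qed.

Lemma level_anc k H A : anc par k H = Some A -> level par H + k <= level par A.
Proof.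
elim: k H => [|k IH] H; first by move=> [->]; rewrite addn0.
rewrite ancSr; case hp: (par H) => [P|] // hk.
by rewrite addnS; apply: leq_trans (IH _ hk); rewrite -addSn leq_add2r level_par.
Qed.

Lemma level_root_max H : level par H <= level par root.
Proof.
case: (hreach H) => e he; have := level_anc he.
by apply: leq_trans; rewrite leq_addr.
Qed.

Lemma height_root : height par = level par root.
Proof.
apply/eqP; rewrite eqn_leq; apply/andP; split; last exact: leq_bigmax.
by apply/bigmax_leqP => H _; apply: level_root_max.
Qed.

Lemma level_lt_height H : H != root -> level par H < height par.
Proof.
move=> hH; rewrite height_root; case: (hreach H) => [[|e] he].
  by case: he => eq; rewrite eq eqxx in hH.
by apply: leq_trans (level_anc he); rewrite addnS ltnS leq_addr.
Qed.

Lemma anc_pred k H A : anc par k.+1 H = Some A ->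
  exists D, anc par k H = Some D /\ par D = Some A.
Proof.
rewrite ancS; case: (anc par k H) => [D|] //= hD; by exists D.
Qed.

End Tree.

Section Sep.
Variables (n m : nat) (u v : 'I_m -> 'I_n).
Variables (T : finType) (root : T) (par : T -> option T).
Variables (region : T -> {set 'I_m}) (sep bd : T -> {set 'I_n}).
Hypothesis hroot : par root = None.
Hypothesis hreach : forall H, exists k, anc par k H = Some root.
Hypothesis hsplit : forall H, ~~ is_leaf par H ->
     exists D1 D2,
       [/\ D1 != D2, children par H = [set D1; D2],
           region D1 :&: region D2 = set0,
           region D1 :|: region D2 = region H &
           Vset u v (region D1) :&: Vset u v (region D2) = sep H].
Hypothesis hbdroot : bd root = set0.
Hypothesis hbd : forall D H, par D = Some H ->
     bd D = (bd H :|: sep H) :&: Vset u v (region D).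

Local Notation F := (Fset u v par region sep bd).
Local Notation V X := (Vset u v (region X)).

Lemma child_nonleaf D H : par D = Some H -> ~~ is_leaf par H.
Proof.
move=> hp; rewrite /is_leaf; apply/set0Pn; exists D; by rewrite inE hp.
Qed.

Lemma child_in D H : par D = Some H -> D \in children par H.
Proof. by move=> hp; rewrite inE hp. Qed.

Lemma Vset_sub (A B : {set 'I_m}) : A \subset B -> Vset u v A \subset Vset u v B.
Proof.
move=> sAB; apply/subsetP => x; rewrite !inE => /existsP [e /andP [eA he]].
by apply/existsP; exists e; rewrite (subsetP sAB) ?he.
Qed.

Lemma region_sub D H : par D = Some H -> region D \subset region H.
Proof.
move=> hp; have [D1 [D2 [_ hc _ hu _]]] := hsplit (child_nonleaf hp).
have := child_in hp; rewrite hc !inE -hu => /orP [] /eqP ->.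
  exact: subsetUl.
exact: subsetUr.
Qed.

Lemma V_par D H : par D = Some H -> V D \subset V H.
Proof. by move=> hp; apply: Vset_sub; apply: region_sub hp. Qed.

Lemma V_anc k D H : anc par k D = Some H -> V D \subset V H.
Proof.
elim: k D => [|k IH] D; first by move=> [->].
rewrite ancSr; case hp: (par D) => [P|] // hk.
exact: subset_trans (V_par hp) (IH _ hk).
Qed.

Lemma F_nonleaf H : ~~ is_leaf par H -> F H = sep H :\: bd H.
Proof. by rewrite /Fset => /negbTE ->. Qed.

Lemma F_sub_V H : F H \subset V H.
Proof.
rewrite /Fset; case: ifP => hl; first exact: subsetDl.
have [D1 [D2 [_ hc _ _ hs]]] := hsplit (negbT hl).
have hD1 : par D1 = Some H.
  have : D1 \in [set D1; D2] by rewrite !inE eqxx.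
  by rewrite -hc inE => /eqP.
rewrite -hs; apply: subset_trans (subsetDl _ _) _.
exact: subset_trans (subsetIl _ _) (V_par hD1).
Qed.

Lemma F_bd H i : i \in F H -> i \notin bd H.
Proof. by rewrite /Fset; case: ifP => _; rewrite inE => /andP []. Qed.

Lemma bd_child D P : par D = Some P -> bd D \subset bd P :|: F P.
Proof.
move=> hp; rewrite (hbd hp) (F_nonleaf (child_nonleaf hp)).
apply/subsetP => i; rewrite !inE => /andP [/orP [->|hs] _] //.
by rewrite hs andbT; case: (i \in bd P).
Qed.

Lemma bd_desc k D C i : i \in bd C -> anc par k D = Some C -> i \in V D -> i \in bd D.
Proof.
elim: k D => [|k IH] D; first by move=> hi [->].
rewrite ancSr; case hp: (par D) => [P|] // hi hk hv.
have hP : i \in bd P by apply: IH => //; apply: (subsetP (V_par hp)).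
by rewrite (hbd hp) in_setI hv andbT in_setU hP.
Qed.

Lemma F_desc k D C i : i \in F C -> anc par k.+1 D = Some C -> i \in V D -> i \in bd D.
Proof.
move=> hi /anc_pred [P [hk hp]] hv.
have hP : i \in V P by apply: (subsetP (V_anc hk)).
apply: (bd_desc (k := k) (C := P)) => //.
rewrite (hbd hp) in_setI hP andbT in_setU; apply/orP; right.
by move: hi; rewrite (F_nonleaf (child_nonleaf hp)) inE => /andP [].
Qed.

Lemma F_disj_sub N C : level par C < N -> forall i H H' a b,
  anc par a H = Some C -> anc par b H' = Some C ->
  i \in F H -> i \in F H' -> H = H'.
Proof.
elim: N C => [//|N IH] C hlev i H H' a b ha hb hi hi'.
case: a ha => [|a] ha.
  case: ha => eq; subst C; case: b hb => [|b] hb; first by case: hb.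
  have := F_desc hi hb (subsetP (F_sub_V H') _ hi').
  by rewrite (negbTE (F_bd hi')).
case: b hb => [|b] hb.
  case: hb => eq; subst C.
  have := F_desc hi' ha (subsetP (F_sub_V H) _ hi).
  by rewrite (negbTE (F_bd hi)).
have [Da [hDa hpa]] := anc_pred ha.
have [Db [hDb hpb]] := anc_pred hb.
case: (eqVneq Da Db) => [eab|nab].
  subst Db; apply: (IH Da _ i H H' a b hDa hDb hi hi').
  by apply: leq_trans (level_par hroot hreach hpa) _; rewrite -ltnS.
have [D1 [D2 [n12 hc _ _ hs]]] := hsplit (child_nonleaf hpa).
have hsep : sep C = V Da :&: V Db.
  have := child_in hpa; have := child_in hpb; rewrite hc !inE.
  move=> /orP [] /eqP eb /orP [] /eqP ea; subst Da Db => //;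
    by rewrite ?eqxx in nab; rewrite -hs // setIC.
have iVa : i \in V Da by apply: (subsetP (V_anc hDa)); apply: (subsetP (F_sub_V H)).
have iVb : i \in V Db by apply: (subsetP (V_anc hDb)); apply: (subsetP (F_sub_V H')).
have ibd : i \in bd Da by rewrite (hbd hpa) in_setI in_setU hsep in_setI iVa iVb orbT.
have := bd_desc ibd hDa (subsetP (F_sub_V H) _ hi).
by rewrite (negbTE (F_bd hi)).
Qed.

Lemma F_disj i H H' : i \in F H -> i \in F H' -> H = H'.
Proof.
have [a ha] := hreach H; have [b hb] := hreach H'.
exact: (@F_disj_sub (level par root).+1 root (ltnSn _) i H H' a b ha hb).
Qed.

Lemma bd_in_anc A i : i \in bd A ->
  exists B k, [/\ 0 < k, anc par k A = Some B & i \in F B].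
Proof.
have [e he] := hreach A.
elim: e A he i => [|e IH] A he i.
  by case: he => ->; rewrite hbdroot inE.
move: he; rewrite ancSr; case hp: (par A) => [P|] // he hi.
have := subsetP (bd_child hp) _ hi; rewrite inE => /orP [hP|hF].
  have [B [k [k0 hk hB]]] := IH P he i hP.
  by exists B, k.+1; split => //; rewrite ancSr hp.
by exists P, 1; split => //; rewrite ancSr hp.
Qed.

End Sep.

Local Open Scope ring_scope.

Lemma gram_unit (R : rcfType) r k (D : 'M[R]_(r, k)) :
  row_free D -> D *m D^T \in unitmx.
Proof.
move=> fD; rewrite -row_free_unit; apply: inj_row_free => v H.
have y0 : v *m D = 0.
  set y := v *m D.
  have Hy : y *m y^T = 0 by rewrite /y trmx_mul mulmxA -(mulmxA v) H mul0mx.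
  apply/matrixP => i j; rewrite [i]ord1 mxE.
  have := congr1 (fun M : 'M_1 => M 0 0) Hy; rewrite !mxE => /eqP.
  rewrite psumr_eq0 => [/allP/(_ j (mem_index_enum _))|l _]; last first.
    by rewrite !mxE -expr2 sqr_ge0.
  by rewrite !mxE -expr2 sqrf_eq0 => /eqP.
by apply: (row_free_inj fD); rewrite y0 mul0mx.
Qed.

Lemma pinv_fact (R : rcfType) k r (C : 'M[R]_(k, r)) (D : 'M[R]_(r, k)) :
  row_free D -> row_free C^T ->
  penrose (C *m D) (D^T *m invmx (D *m D^T) *m invmx (C^T *m C) *m C^T).
Proof.
move=> fD fCt.
have u1 := gram_unit fD.
have u2 := gram_unit fCt; rewrite trmxK in u2.
set G1 := D *m D^T in u1 *; set G2 := C^T *m C in u2 *.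
have s1 : G1^T = G1 by rewrite /G1 trmx_mul trmxK.
have s2 : G2^T = G2 by rewrite /G2 trmx_mul trmxK.
have AX : C *m D *m (D^T *m invmx G1 *m invmx G2 *m C^T) = C *m invmx G2 *m C^T.
  by rewrite !mulmxA -(mulmxA C D) -/G1 mulmxK.
have XA : (D^T *m invmx G1 *m invmx G2 *m C^T) *m (C *m D) = D^T *m invmx G1 *m D.
  by rewrite !mulmxA -(mulmxA _ C^T C) -/G2 mulmxKV.
split.
- by rewrite AX !mulmxA -(mulmxA _ C^T C) -/G2 mulmxKV.
- by rewrite XA !mulmxA -(mulmxA _ D D^T) -/G1 mulmxKV.
- by rewrite AX !trmx_mul trmxK trmx_inv s2 mulmxA.
- by rewrite XA !trmx_mul trmxK trmx_inv s1 mulmxA.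
Qed.

Lemma pinv_exists (R : rcfType) k (A : 'M[R]_k) : exists X, penrose A X.
Proof.
have fD : row_free (row_base A) by exact: row_base_free.
have fCt : row_free (col_base A)^T.
  by rewrite /row_free mxrank_tr; have := col_base_full A; rewrite /row_full.
have := pinv_fact fD fCt; rewrite mulmx_base => H.
by eexists; exact: H.
Qed.

Lemma pinv_supp (R : rcfType) k (A Y : 'M[R]_k) (S : {set 'I_k}) :
  penrose A Y -> (forall i j, i \notin S -> A i j = 0) ->
  (forall i j, j \notin S -> A i j = 0) ->
  (forall i j, i \notin S -> Y i j = 0) /\ (forall i j, j \notin S -> Y i j = 0).
Proof.
move=> [_ h2 h3 h4] hr hc.
have E1 : Y = Y *m Y^T *m A^T by rewrite -mulmxA -trmx_mul h3 mulmxA h2.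
have E2 : Y = A^T *m Y^T *m Y by rewrite -trmx_mul h4 h2.
split => i j hi.
  rewrite E2 mxE big1 // => l _; rewrite mxE big1 ?mul0r // => l' _.
  by rewrite !mxE hc ?mul0r.
rewrite E1 mxE big1 // => l _; by rewrite [A^T _ _]mxE hr ?mulr0.
Qed.

Lemma MPinv_penrose (R : rcfType) k (A : 'M[R]_k) : penrose A (MPinv A).
Proof. rewrite /MPinv; apply: epsilon_spec; exact: pinv_exists. Qed.

Lemma idS_diag (R : rcfType) k (S : {set 'I_k}) :
  idS S = diag_mx (\row_i (i \in S)%:R) :> 'M[R]_k.
Proof.
apply/matrixP => i j; rewrite !mxE; case: (eqVneq i j) => [->|ne] /=.
  by rewrite mulr1n.
by rewrite mulr0n.
Qed.

Lemma idS_mul (R : rcfType) k p (S : {set 'I_k}) (M : 'M[R]_(k, p)) i j :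
  (idS S *m M) i j = if i \in S then M i j else 0.
Proof. by rewrite idS_diag mul_diag_mx !mxE; case: (i \in S); rewrite ?mul1r ?mul0r. Qed.

Lemma mul_idS (R : rcfType) k p (S : {set 'I_k}) (M : 'M[R]_(p, k)) i j :
  (M *m idS S) i j = if j \in S then M i j else 0.
Proof. by rewrite idS_diag mul_mx_diag !mxE; case: (j \in S); rewrite ?mulr1 ?mulr0. Qed.

Section Mat.
Variables (R : rcfType) (n m : nat) (u v : 'I_m -> 'I_n) (w : 'I_m -> R).
Variables (T : finType) (root : T) (par : T -> option T).
Variables (region : T -> {set 'I_m}) (sep bd : T -> {set 'I_n}).
Variable (L : T -> 'M[R]_n).
Hypothesis hroot : par root = None.
Hypothesis hreach : forall H, exists k, anc par k H = Some root.
Hypothesis hsplit : forall H, ~~ is_leaf par H ->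
     exists D1 D2,
       [/\ D1 != D2, children par H = [set D1; D2],
           region D1 :&: region D2 = set0,
           region D1 :|: region D2 = region H &
           Vset u v (region D1) :&: Vset u v (region D2) = sep H].
Hypothesis hbdroot : bd root = set0.
Hypothesis hregroot : region root = [set: 'I_m].
Hypothesis hbd : forall D H, par D = Some H ->
     bd D = (bd H :|: sep H) :&: Vset u v (region D).

Local Notation F := (Fset u v par region sep bd).
Local Notation V X := (Vset u v (region X)).
Local Notation X := (Xop u v par region sep bd L).
Local Notation Pi := (PiOp u v par region sep bd L).
Local Notation eta := (height par).

Lemma Xop_row H i j : i \notin bd H -> X H i j = 0.
Proof.
move=> hi; rewrite /Xop mxE big1 // => k _; by rewrite /subm mxE (negbTE hi) mul0r.
Qed.

Lemma Xop_col H i j : j \notin F H -> X H i j = 0.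
Proof.
move=> hj; rewrite /Xop mxE big1 // => k _.
have hr : forall i j, i \notin F H -> subm (F H) (F H) (L H) i j = 0.
  by move=> a b ha; rewrite /subm mxE (negbTE ha).
have hc : forall i j, j \notin F H -> subm (F H) (F H) (L H) i j = 0.
  by move=> a b hb; rewrite /subm mxE (negbTE hb) andbF.
have [_ h] := pinv_supp (MPinv_penrose (subm (F H) (F H) (L H))) hr hc.
by rewrite h ?mulr0.
Qed.

Lemma XT_coord H (y : 'cV[R]_n) i :
  ((X H)^T *m y) i 0 = \sum_j X H j i * y j 0.
Proof. by rewrite mxE; apply: eq_bigr => j _; rewrite mxE. Qed.

Lemma XT_coord0 H (y : 'cV[R]_n) i : i \notin F H -> ((X H)^T *m y) i 0 = 0.
Proof. by move=> hi; rewrite XT_coord big1 // => j _; rewrite Xop_col ?mul0r. Qed.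

Lemma PiT_coord k (y : 'cV[R]_n) i :
  ((Pi k)^T *m y) i 0 = y i 0 - \sum_(H | level par H == k) ((X H)^T *m y) i 0.
Proof.
rewrite mxE.
under eq_bigr => j _ do rewrite /PiOp !mxE summxE mulrBl.
rewrite sumrB; congr (_ - _).
  rewrite (bigD1 i) //= big1 ?addr0; first by rewrite eqxx mul1r.
  by move=> j hj; rewrite (negbTE hj) mul0r.
under eq_bigr => j _ do rewrite mulr_suml.
rewrite exchange_big /=; apply: eq_bigr => H _.
rewrite mxE; apply: eq_bigr => j _; by rewrite [(X H)^T _ _]mxE.
Qed.

Let Fdisj := F_disj hroot hreach hsplit hbd.

Definition Q k := foldr (fun i acc => (Pi i)^T *m acc) 1%:M (iota k (eta - k)).

Lemma Q_lt k : (k < eta)%N -> Q k = (Pi k)^T *m Q k.+1.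
Proof. by move=> lt; rewrite /Q -subnSK. Qed.

Lemma Q_ge k : (eta <= k)%N -> Q k = 1%:M.
Proof. by rewrite /Q -subn_eq0 => /eqP ->. Qed.

Lemma Q0 : Q 0 = PiProdT u v par region sep bd L.
Proof. by rewrite /Q subn0. Qed.

Variable z : 'cV[R]_n.
Let xs k := Q k *m z.

Lemma xs_step k i : (k < eta)%N ->
  xs k i 0 = xs k.+1 i 0 - \sum_(H | level par H == k) ((X H)^T *m xs k.+1) i 0.
Proof. by move=> lt; rewrite /xs Q_lt // -mulmxA PiT_coord. Qed.

Lemma xs_keep k i : (forall H, level par H = k -> i \notin F H) ->
  xs k i 0 = xs k.+1 i 0.
Proof.
move=> hn; case: (ltnP k eta) => lt.
  rewrite xs_step // big1 ?subr0 // => H /eqP hl; exact: XT_coord0 (hn H hl).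
by rewrite /xs !Q_ge // ltnW.
Qed.

Lemma xs_F A i : i \in F A -> (level par A < eta)%N ->
  xs (level par A) i 0 = xs (level par A).+1 i 0 - ((X A)^T *m xs (level par A).+1) i 0.
Proof.
move=> hi lt; rewrite xs_step // (bigD1 A) //= big1 ?addr0 // => H /andP [_ hHA].
by apply: XT_coord0; apply/negP => hH; rewrite (Fdisj hH hi) eqxx in hHA.
Qed.

Lemma xs_stable A i d a : i \in F A -> ((level par A < a)%N \/ (a + d <= level par A)%N) ->
  xs a i 0 = xs (a + d) i 0.
Proof.
move=> hi; elim: d a => [|d IH] a hc; first by rewrite addn0.
rewrite (xs_keep (k := a)); last first.
  move=> H hl; apply/negP => hH; have eq := Fdisj hH hi; subst H.
  by case: hc; rewrite hl ?ltnn // addnS ltnNge leq_addr.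
rewrite -addSnnS IH //; case: hc => [h|h]; [left; exact: ltnW | right].
by rewrite addSnnS.
Qed.

Lemma xs_eta : xs eta = z.
Proof. by rewrite /xs Q_ge // mul1mx. Qed.

Let x := PiProdT u v par region sep bd L *m z.

Lemma x_xs0 : x = xs 0.
Proof. by rewrite /x /xs Q0. Qed.

Lemma KP A i : A != root -> i \in F A -> x i 0 = z i 0 - ((X A)^T *m x) i 0.
Proof.
move=> hA hi; have lt := level_lt_height hroot hreach hA.
have e1 : x i 0 = xs (level par A) i 0.
  by rewrite x_xs0 (xs_stable (A := A) (d := level par A) hi) //; right.
have e2 : xs (level par A).+1 i 0 = z i 0.
  rewrite (xs_stable (A := A) (d := eta - (level par A).+1) hi); last by left.
  by rewrite subnKC // xs_eta.
rewrite e1 xs_F // e2; congr (_ - _).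
rewrite !XT_coord; apply: eq_bigr => j _.
case: (boolP (j \in bd A)) => hj; last by rewrite Xop_row ?mul0r.
have [B [k [k0 hk hjB]]] := bd_in_anc hreach hbdroot hbd hj.
have lB := level_anc hroot hreach hk.
rewrite x_xs0 (xs_stable (A := B) (d := (level par A).+1) (a := 0) hjB) //.
by right; apply: leq_trans lB; rewrite add0n -addn1 leq_add2l.
Qed.

Lemma x_root i : i \in F root -> x i 0 = z i 0.
Proof.
move=> hi; rewrite x_xs0 (xs_stable (A := root) (d := eta) (a := 0) hi).
  by rewrite add0n xs_eta.
by right; rewrite add0n (height_root hroot hreach).
Qed.

Local Notation Me := (Medge u v par region sep bd L).
Local Notation Mp := (Mpath u v par region sep bd L).

Lemma foldr_shift (g g' : nat -> 'M[R]_n) s k :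
  (forall j, (s <= j < s + k)%N -> g j.+1 = g' j) ->
  foldr (fun j acc => g j *m acc) 1%:M (iota s.+1 k) =
  foldr (fun j acc => g' j *m acc) 1%:M (iota s k).
Proof.
elim: k s => [//|k IH] s h /=.
rewrite h ?leqnn ?addnS ?ltnS ?leq_addr //; congr (_ *m _).
apply: IH => j /andP [h1 h2]; apply: h; rewrite (ltnW h1) /=.
by rewrite addnS -addSn.
Qed.

Lemma Mpath_S A P k B : par A = Some P -> anc par k P = Some B ->
  Mp A k.+1 = Me A *m Mp P k.
Proof.
move=> hp hk; rewrite /Mpath /=; congr (_ *m _).
apply: foldr_shift => j /andP [_ hj].
rewrite add0n in hj.
rewrite ancSr hp.
case e: (anc par j P) => [C|] //.
by have := anc_none_mono e (ltnW hj); rewrite hk.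
Qed.

Definition yv A := \sum_(A' | is_anc par A' A) Mp A (tdist par A A') *m idS (F A') *m z.

Lemma coordP (y1 y2 : 'cV[R]_n) : (forall i, y1 i 0 = y2 i 0) -> y1 = y2.
Proof. by move=> h; apply/matrixP => i j; rewrite [j]ord1 h. Qed.

Lemma yv_root : yv root = idS (bd root :|: F root) *m x.
Proof.
rewrite /yv (big_pred1 root); last first.
  move=> A' /=; apply/(is_ancP hroot hreach)/eqP => [[[|k] hk]|->]; last by exists 0.
    by case: hk.
  by rewrite (anc_root_none hroot) in hk.
rewrite (tdistE hroot hreach (k := 0)) // mul1mx hbdroot set0U.
by apply: coordP => i; rewrite !idS_mul; case: ifP => // hi; rewrite x_root.
Qed.

Lemma coordD (a b : 'cV[R]_n) i : (a + b) i 0 = a i 0 + b i 0.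
Proof. by rewrite !mxE. Qed.
Lemma coordB (a b : 'cV[R]_n) i : (a - b) i 0 = a i 0 - b i 0.
Proof. by rewrite !mxE. Qed.

Lemma yv_claim A : yv A = idS (bd A :|: F A) *m x.
Proof.
have [e he] := hreach A.
elim: e A he => [|e IH] A he.
  by case: he => ->; exact: yv_root.
move: he; rewrite ancSr; case hp: (par A) => [P|] // he.
have IHP := IH P he.
have hAP : forall k, anc par k P = Some A -> False.
  move=> k hk; have h1 : anc par k.+1 A = Some A by rewrite ancSr hp.
  by have := anc_uniq hroot hreach h1 (erefl : anc par 0 A = Some A).
have hsplitA : yv A = idS (F A) *m z + Me A *m yv P.
  rewrite /yv (bigD1 A) /=; last by apply/(is_ancP hroot hreach); exists 0.
  rewrite (tdistE hroot hreach (k := 0)) // mul1mx; congr (_ + _).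
  rewrite (eq_bigl (fun A' => is_anc par A' P)); last first.
    move=> A' /=; apply/idP/idP.
    - move=> /andP [/(is_ancP hroot hreach) [[|k] hk] hne].
        by case: hk => eq; rewrite eq eqxx in hne.
      by apply/(is_ancP hroot hreach); exists k; move: hk; rewrite ancSr hp.
    - move=> /(is_ancP hroot hreach) [k hk]; apply/andP; split.
        by apply/(is_ancP hroot hreach); exists k.+1; rewrite ancSr hp.
      by apply/eqP => eq; subst A'; exact: (hAP k hk).
  rewrite mulmx_sumr; apply: eq_bigr => A' /(is_ancP hroot hreach) [k hk].
  have hk1 : anc par k.+1 A = Some A' by rewrite ancSr hp.
  by rewrite (tdistE hroot hreach hk1) (tdistE hroot hreach hk) (Mpath_S hp hk) !mulmxA.
rewrite hsplitA IHP; apply: coordP => i.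
rewrite coordD /Medge mulmxBl coordB !idS_mul.
have hXT : ((X A)^T *m (idS (bd P :|: F P) *m x)) i 0 = ((X A)^T *m x) i 0.
  rewrite !XT_coord; apply: eq_bigr => j _; rewrite idS_mul; case: ifP => // hj.
  case: (boolP (j \in bd A)) => hjb; last by rewrite Xop_row ?mul0r.
  by rewrite (subsetP (bd_child hbd hp) _ hjb) in hj.
rewrite hXT.
have hAr : A != root by apply/eqP => eq; rewrite eq hroot in hp.
case: (boolP (i \in F A)) => hiF.
  have hnS : i \notin bd P :|: F P.
    rewrite in_setU negb_or; apply/andP; split; apply/negP => h.
      have [B [k [k0 hk hB]]] := bd_in_anc hreach hbdroot hbd h.
      have eq := Fdisj hB hiF; subst B; exact: (hAP k hk).
    have eq := Fdisj h hiF; subst P; exact: (hAP 0 (erefl _)).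
  by rewrite (negbTE hnS) in_setU hiF orbT (KP hAr hiF) sub0r.
rewrite XT_coord0 // subr0 add0r.
case: (boolP (i \in bd A)) => hib.
  by rewrite in_setU hib /= (subsetP (bd_child hbd hp) _ hib).
by rewrite in_setU (negbTE hib) (negbTE hiF).
Qed.

Lemma leaf_part (p : nat) (B : 'M[R]_(m, p)) N C : (level par C < N)%N ->
  \sum_(H | is_leaf par H && is_anc par C H) restrict_rows (region H) B =
  restrict_rows (region C) B.
Proof.
elim: N C => [//|N IH] C hlev.
have ancP := is_ancP hroot hreach.
case: (boolP (is_leaf par C)) => hC.
  rewrite (big_pred1 C) // => H /=; apply/andP/eqP => [[hl /ancP [[|k] hk]]|->].
  - by case: hk.
  - have [D [_ hD]] := anc_pred hk.
    by rewrite (negbTE (child_nonleaf hD)) in hC.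
  - by split => //; apply/ancP; exists 0.
have [D1 [D2 [n12 hc hI hU hs]]] := hsplit hC.
have hp1 : par D1 = Some C.
  have : D1 \in children par C by rewrite hc !inE eqxx.
  by rewrite inE => /eqP.
have hp2 : par D2 = Some C.
  have : D2 \in children par C by rewrite hc !inE eqxx orbT.
  by rewrite inE => /eqP.
have lev D : par D = Some C -> (level par D < N)%N.
  by move=> hD; apply: leq_trans (level_par hroot hreach hD) _; rewrite -ltnS.
rewrite (bigID (fun H => is_anc par D1 H)) /=.
rewrite (eq_bigl (fun H => is_leaf par H && is_anc par D1 H)); last first.
  move=> H; case: (boolP (is_anc par D1 H)) => h1; rewrite ?andbF ?andbT //.
  case: (is_leaf par H) => //=; move/ancP: h1 => [k hk]; apply/ancP; exists k.+1.
  by rewrite ancS hk /= hp1.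
rewrite [X in _ + X](eq_bigl (fun H => is_leaf par H && is_anc par D2 H)); last first.
  move=> H; case: (boolP (is_leaf par H)) => hl //=.
  apply/idP/idP.
  - move=> /andP [/ancP [[|k] hk] hn1].
      by case: hk => eq; subst H; rewrite hl in hC.
    have [D [hkD hD]] := anc_pred hk.
    have : D \in children par C by rewrite inE hD.
    rewrite hc !inE => /orP [] /eqP eq; subst D.
      by rewrite (_ : is_anc par D1 H) in hn1 => //; apply/ancP; exists k.
    by apply/ancP; exists k.
  - move=> /ancP [k hk]; apply/andP; split.
      by apply/ancP; exists k.+1; rewrite ancS hk /= hp2.
    apply/negP => /ancP [k' hk'].
    have e1 : anc par k.+1 H = Some C by rewrite ancS hk /= hp2.
    have e2 : anc par k'.+1 H = Some C by rewrite ancS hk' /= hp1.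
    have ekk := anc_uniq hroot hreach e1 e2; case: ekk => ekk; subst k'.
    by move: hk'; rewrite hk => -[eq]; rewrite eq eqxx in n12.
rewrite (IH D1 (lev _ hp1)) (IH D2 (lev _ hp2)).
apply/matrixP => e j; rewrite !mxE -hU in_setU.
case: (boolP (e \in region D1)) => h1; case: (boolP (e \in region D2)) => h2 //=.
- have : e \in region D1 :&: region D2 by rewrite in_setI h1 h2.
  by rewrite hI inE.
- by rewrite addr0.
- by rewrite add0r.
- by rewrite addr0.
Qed.

Lemma Jop_supp H : is_leaf par H ->
  Jop u v w region H *m idS (bd H :|: F H) = Jop u v w region H.
Proof.
move=> hl; rewrite /Jop -mulmxA; congr (_ *m _).
apply/matrixP => e j; rewrite mul_idS; case: ifP => // hj.
rewrite /restrict_rows mxE; case: ifP => // he.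
have hV : forall y, (y == u e) || (y == v e) -> y \in bd H :|: F H.
  move=> y hy; rewrite in_setU /Fset hl in_setD.
  case: (y \in bd H) => //=; rewrite inE; apply/existsP; exists e.
  by rewrite he /=; move: hy => /orP [] /eqP ->; rewrite eqxx ?orbT.
rewrite mxE.
case: (eqVneq j (u e)) => eu; first by rewrite hV ?eu ?eqxx in hj.
case: (eqVneq j (v e)) => ev; first by rewrite hV ?ev ?eqxx ?orbT in hj.
by rewrite subrr.
Qed.

Lemma main_sec :
  slackM u v w par region sep bd L *m z =
  sqrtW w *m incidence R u v *m PiProdT u v par region sep bd L *m z.
Proof.
rewrite /slackM mulmx_suml.
under eq_bigr => H hl.
  rewrite mulmx_suml.
  have -> : \sum_(i | is_anc par i H)
      Jop u v w region H *m Mp H (tdist par H i) *m idS (F i) *m z =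
      Jop u v w region H *m yv H.
    by rewrite /yv mulmx_sumr; apply: eq_bigr => A' _; rewrite !mulmxA.
  rewrite yv_claim mulmxA (Jop_supp hl) /Jop.
  over.
rewrite -mulmxA -[PiProdT _ _ _ _ _ _ _ *m z]/x.
rewrite -mulmx_suml -mulmx_sumr; congr (_ *m _ *m _).
rewrite (eq_bigl (fun H => is_leaf par H && is_anc par root H)); last first.
  move=> H; have [k hk] := hreach H.
  by rewrite (_ : is_anc par root H) ?andbT //; apply/(is_ancP hroot hreach); exists k.
rewrite (leaf_part _ (ltnSn _)).
by apply/matrixP => e j; rewrite mxE hregroot inE.
Qed.

End Mat.

Theorem mainTheorem14 (R : rcfType) (n m : nat)
    (u v : 'I_m -> 'I_n) (w : 'I_m -> R)
    (T : finType) (root : T) (par : T -> option T)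
    (region : T -> {set 'I_m}) (sep bd : T -> {set 'I_n})
    (L : T -> 'M[R]_n) :
  (* G: connected loopless multigraph with positive edge weights *)
  (forall e, u e != v e) ->
  (forall e, 0 < w e) ->
  graph_connected u v ->
  (* T is a rooted tree with root `root` *)
  par root = None ->
  (forall H, H != root -> par H != None) ->
  (forall H, exists k, anc par k H = Some root) ->
  (* separator tree structure *)
  region root = [set: 'I_m] ->
  (forall H, ~~ is_leaf par H ->
     exists D1 D2,
       [/\ D1 != D2, children par H = [set D1; D2],
           region D1 :&: region D2 = set0,
           region D1 :|: region D2 = region H &
           Vset u v (region D1) :&: Vset u v (region D2) = sep H]) ->
  (forall H, is_leaf par H -> sep H = set0) ->
  bd root = set0 ->
  (forall D H, par D = Some H ->
     bd D = (bd H :|: sep H) :&: Vset u v (region D)) ->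
  (* the given Laplacians L^(H), supported on dH u F_H *)
  (forall H, is_laplacian (L H) /\
     supported_on (L H) (bd H :|: Fset u v par region sep bd H)) ->
  forall z : 'cV[R]_n,
    slackM u v w par region sep bd L *m z =
    sqrtW w *m incidence R u v *m PiProdT u v par region sep bd L *m z.
Proof.
move=> _ _ _ hroot _ hreach hreg hsplit _ hbdroot hbd _ z.
exact: (main_sec w L hroot hreach hsplit hbdroot hreg hbd z).
Qed.
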